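(* Let $x:[t_0,t_c]\to\mathbb{R}^n$ and $u:[t_0,t_c]\to\mathbb{R}^d$ be continuous, $k_m>0$, and let $m:[t_0,t_c]\to\mathbb{R}^{n\times n(n+d)}$ solve $\dot m=Y(x(t),u(t))-k_m m$, $m(t_0)=0$. Let $t_0\le t_{w_1}<\dots<t_{w_p}=t_c$ with $p\ge n+d$, $m_j=m(t_{w_j})$ and $M=[m_1^T,\dots,m_p^T]^T\in\mathbb{R}^{np\times n(n+d)}$. If $\operatorname{rank}(M)=n(n+d)$, then the signal $w(t)=[x(t)^T,u(t)^T]^T$ is exciting over $[t_0,t_c]$, i.e. there is $\alpha>0$ with $\int_{t_0}^{t_c}w(\tau)w(\tau)^T\,d\tau\ge\alpha I_{n+d}$.
   Context: $Y(x,u)=[I_n\otimes x^T,\ I_n\otimes u^T]\in\mathbb{R}^{n\times n(n+d)}$. A bounded vector signal $w(t)$ is called exciting over an interval $[t,t+T]$, $T>0$, if there is $\alpha>0$ with $\int_t^{t+T}w(\tau)w(\tau)^T\,d\tau\ge\alpha I$ (matrix inequality in the positive semidefinite order). *)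

(* Defs.v *)
From Stdlib Require Import Reals Lra Lia Arith.
Open Scope R_scope.

Fixpoint fsum (N : nat) (f : nat -> R) : R :=
  match N with
  | O => 0
  | S k => fsum k f + f k
  end.

Definition cont_on (f : R -> R) (a b : R) : Prop :=
  forall t, a <= t <= b -> limit1_in f (fun s => a <= s <= b) (f t) t.

(* Entry (i, c) of Y(x,u) = [I_n (x) x^T, I_n (x) u^T] in R^{n x n(n+d)},
   0-based indices; column c < n*n is block column of I_n (x) x^T,
   c = k*n + l gives delta_{ik} x_l; column n*n + k*d + l gives delta_{ik} u_l. *)
Definition Yent (n d : nat) (x u : nat -> R) (i c : nat) : R :=
  if (c <? n * n)%nat then
    (if Nat.eqb i (c / n) then x (c mod n) else 0)
  else
    let c' := (c - n * n)%nat in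
    if Nat.eqb i (c' / d) then u (c' mod d) else 0.

(* w = [x^T, u^T]^T in R^{n+d}, padded with zeros beyond index n+d. *)
Definition wsig (n d : nat) (x u : R -> nat -> R) (t : R) (l : nat) : R :=
  if (l <? n)%nat then x t l
  else if (l <? n + d)%nat then u t (l - n)%nat else 0.

(* The N-dimensional signal w is exciting over [a,b]: there is alpha > 0 with
   int_a^b w w^T >= alpha I_N in the positive semidefinite order, i.e.
   v^T (int_a^b w w^T) v >= alpha v^T v for all v in R^N.  The integral is the
   entrywise Riemann integral; RiemannInt does not depend on the
   integrability proof, so quantifying over it is harmless. *)
Definition exciting (N : nat) (w : R -> nat -> R) (a b : R) : Prop :=
  exists alpha : R, alpha > 0 /\
    forall pr : (forall i j : nat, Riemann_integrable (fun t => w t i * w t j) a b),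
    forall v : nat -> R,
      fsum N (fun i => fsum N (fun j => v i * RiemannInt (pr i j) * v j))
      >= alpha * fsum N (fun i => v i * v i).

(* rank(M) = number of columns (full column rank) for the stacked matrix
   M = [m(tw 0); ...; m(tw (p-1))] (each block n x ncol):
   the columns are linearly independent, i.e. M v = 0 implies v = 0. *)
Definition stacked_full_col_rank (n p ncol : nat) (m : R -> nat -> nat -> R)
  (tw : nat -> R) : Prop :=
  forall v : nat -> R,
    (forall j i, (j < p)%nat -> (i < n)%nat ->
       fsum ncol (fun c => m (tw j) i c * v c) = 0) ->
    forall c, (c < ncol)%nat -> v c = 0.

(* Main.v *)
Require Import Defs.
From Stdlib Require Import Reals Lra Lia Arith Psatz Classical.
From Coquelicot Require Import Coquelicot.
Open Scope R_scope.

Lemma fsum_ext N f g : (forall i, (i < N)%nat -> f i = g i) -> fsum N f = fsum N g.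
Proof. induction N; simpl; intros H; auto. rewrite IHN by (intros; apply H; lia). rewrite H by lia; auto. Qed.

Lemma fsum_plus N f g : fsum N (fun i => f i + g i) = fsum N f + fsum N g.
Proof. induction N; simpl; [lra|]. rewrite IHN; lra. Qed.

Lemma fsum_scal N c f : fsum N (fun i => c * f i) = c * fsum N f.
Proof. induction N; simpl; [lra|]. rewrite IHN; lra. Qed.

Lemma fsum_0 N f : (forall i, (i < N)%nat -> f i = 0) -> fsum N f = 0.
Proof. intros H. rewrite (fsum_ext N f (fun _ => 0)) by auto. induction N; simpl; [lra|]. rewrite IHN; [lra|]. intros; apply H; lia. Qed.

Lemma fsum_ge0 N f : (forall i, (i < N)%nat -> 0 <= f i) -> 0 <= fsum N f.
Proof. induction N; simpl; intros H; [lra|]. assert (0 <= f N) by (apply H; lia). assert (0 <= fsum N f) by (apply IHN; intros; apply H; lia). lra. Qed.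

Lemma fsum_mul N M f g : fsum N f * fsum M g = fsum N (fun i => fsum M (fun j => f i * g j)).
Proof.
  induction N; simpl; [lra|]. rewrite <- IHN. rewrite (fsum_scal M (f N) g). lra.
Qed.

Lemma CS N b v : (fsum N (fun i => b i * v i))^2 <= fsum N (fun i => b i * b i) * fsum N (fun i => v i * v i).
Proof.
  induction N; simpl; [lra|].
  set (S := fsum N (fun i => b i * v i)) in *.
  set (A := fsum N (fun i => b i * b i)) in *.
  set (B := fsum N (fun i => v i * v i)) in *.
  assert (HA : 0 <= A) by (apply fsum_ge0; intros; nra).
  assert (HB : 0 <= B) by (apply fsum_ge0; intros; nra).
  set (x := b N); set (y := v N).
  clearbody S A B x y.
  assert (2 * S * x * y <= A * y * y + x * x * B).
  { destruct (Req_dec A 0) as [H0|H0].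
    - assert (S = 0) by (rewrite H0 in IHN; nra). rewrite H, H0. nra.
    - assert (0 < A) by lra.
      assert (A * (A * y * y + x * x * B - 2 * S * x * y) = (A*y - S*x)^2 + x*x*(A*B - S^2)) by ring.
      assert (0 <= x*x*(A*B-S^2)) by (apply Rmult_le_pos; nra).
      assert (0 <= (A*y - S*x)^2) by apply pow2_ge_0.
      assert (0 <= A * y * y + x * x * B - 2 * S * x * y).
      { destruct (Rle_lt_dec 0 (A * y * y + x * x * B - 2 * S * x * y)); auto. nra. }
      lra. }
  nra.
Qed.

Definition Qf (N : nat) (A : nat -> nat -> R) (v : nat -> R) : R :=
  fsum N (fun i => fsum N (fun j => v i * A i j * v j)).

Definition nrm (N : nat) (v : nat -> R) := fsum N (fun i => v i * v i).

Lemma Qf_S N A v : Qf (S N) A v = Qf N A v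
   + v N * fsum N (fun i => (A i N + A N i) * v i) + A N N * (v N * v N).
Proof.
  unfold Qf. simpl. rewrite fsum_plus.
  assert (E: fsum N (fun i => v i * A i N * v N) + fsum N (fun j => v N * A N j * v j)
    = v N * fsum N (fun i => (A i N + A N i) * v i)).
  { rewrite <- fsum_scal, <- fsum_plus. apply fsum_ext; intros; ring. }
  lra.
Qed.

Lemma Qf_ext N A v v' : (forall i, (i < N)%nat -> v i = v' i) -> Qf N A v = Qf N A v'.
Proof. intros H. unfold Qf. apply fsum_ext; intros. apply fsum_ext; intros. rewrite !H; auto. Qed.

Lemma fsum2_lin N f g c : fsum N (fun i => fsum N (fun j => f i j - g i j * c))
  = fsum N (fun i => fsum N (f i)) - fsum N (fun i => fsum N (g i)) * c.
Proof.
  transitivity (fsum N (fun i => fsum N (f i) + (-c) * fsum N (g i))).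
  - apply fsum_ext; intros. rewrite <- fsum_scal, <- fsum_plus. apply fsum_ext; intros. ring.
  - rewrite fsum_plus, fsum_scal. ring.
Qed.

Lemma PD N : forall A, (forall v, 0 <= Qf N A v) ->
  (forall v, Qf N A v = 0 -> forall i, (i < N)%nat -> v i = 0) ->
  exists alpha, alpha > 0 /\ forall v, Qf N A v >= alpha * nrm N v.
Proof.
  induction N; intros A Hpos Hdef.
  - exists 1; split; [lra|]. intros v; unfold Qf, nrm; simpl; lra.
  - set (b := fun i => A i N + A N i).
    set (a := A N N).
    set (B := fun v => fsum N (fun i => b i * v i)).
    assert (HQ : forall v, Qf (S N) A v = Qf N A v + v N * B v + a * (v N * v N)) by (intros; apply Qf_S).
    assert (Ha : 0 < a).
    { set (e := fun i => if Nat.eqb i N then 1 else 0).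
      assert (E0 : forall i, (i < N)%nat -> e i = 0).
      { intros i Hi. unfold e. destruct (Nat.eqb_spec i N); [lia|auto]. }
      assert (EN : e N = 1) by (unfold e; rewrite Nat.eqb_refl; auto).
      assert (Qf N A e = 0) by (unfold Qf; apply fsum_0; intros; apply fsum_0; intros; rewrite E0; auto; ring).
      assert (B e = 0) by (unfold B; apply fsum_0; intros; rewrite E0; auto; ring).
      pose proof (HQ e). rewrite H, H0, EN in H1.
      pose proof (Hpos e). destruct (Req_dec a 0) as [Z|Z].
      + exfalso. assert (e N = 0). { apply (Hdef e); [lra|lia]. } lra.
      + lra. }
    set (ext := fun (v : nat -> R) i => if Nat.eqb i N then - B v / (2 * a) else v i).
    assert (Eext : forall v i, (i < N)%nat -> ext v i = v i).
    { intros v i Hi; unfold ext; destruct (Nat.eqb_spec i N); [lia|auto]. }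
    set (A' := fun i j => A i j - b i * b j / (4 * a)).
    assert (HQ' : forall v, Qf N A' v = Qf (S N) A (ext v)).
    { intros v. rewrite HQ. rewrite (Qf_ext N A (ext v) v) by auto.
      assert (B (ext v) = B v) by (unfold B; apply fsum_ext; intros; rewrite Eext; auto).
      rewrite H. unfold ext at 1 2 3. rewrite Nat.eqb_refl.
      unfold Qf, A'.
      assert (fsum N (fun i => fsum N (fun j => v i * (A i j - b i * b j / (4 * a)) * v j))
         = fsum N (fun i => fsum N (fun j => v i * A i j * v j)) - B v * B v / (4 * a)).
      { unfold B. rewrite fsum_mul.
        unfold Rdiv at 2. rewrite <- (fsum2_lin N (fun i j => v i * A i j * v j)).
        apply fsum_ext; intros. apply fsum_ext; intros. field. lra. }
      rewrite H0. field. lra. }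
    destruct (IHN A') as [al [Hal Hbd]].
    { intros v. rewrite HQ'. auto. }
    { intros v Hv i Hi. rewrite HQ' in Hv. rewrite <- (Eext v i Hi). apply (Hdef _ Hv); lia. }
    set (beta := fsum N (fun i => b i * b i)).
    assert (Hbeta : 0 <= beta) by (apply fsum_ge0; intros; nra).
    set (K := 1 + beta / (2 * a * a)).
    assert (HK : 1 <= K).
    { unfold K. assert (0 <= beta / (2*a*a)) by (apply Rmult_le_pos; [lra| left; apply Rinv_0_lt_compat; nra]). lra. }
    exists (Rmin (a/2) (al / K)). split.
    { apply Rmin_pos; [lra|]. apply Rdiv_lt_0_compat; lra. }
    intros v.
    set (s := v N + B v / (2 * a)).
    assert (HQs : Qf (S N) A v = a * s * s + Qf N A' v).
    { rewrite HQ, HQ'. rewrite HQ. rewrite (Qf_ext N A (ext v) v) by auto.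
      assert (B (ext v) = B v) by (unfold B; apply fsum_ext; intros; rewrite Eext; auto).
      rewrite H. unfold ext. rewrite Nat.eqb_refl. unfold s. field. lra. }
    assert (HCS : B v ^ 2 <= beta * nrm N v) by apply CS.
    assert (Hn0 : 0 <= nrm N v) by (apply fsum_ge0; intros; nra).
    assert (HvN : v N * v N <= 2 * (s * s) + (K - 1) * nrm N v).
    { assert (v N = s - B v / (2*a)) by (unfold s; ring).
      assert ((B v / (2*a))^2 = B v ^2 / (2*a*a) / 2) by (field; lra).
      assert ((K - 1) * nrm N v = beta * nrm N v / (2*a*a)) by (unfold K; field; lra).
      assert (B v ^2 / (2*a*a) <= beta * nrm N v / (2*a*a)).
      { unfold Rdiv. apply Rmult_le_compat_r; [left; apply Rinv_0_lt_compat; nra | lra]. }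
      rewrite H. set (X := B v / (2*a)) in *.
      assert ((s-X)*(s-X) <= 2*(s*s) + 2*X^2) by (pose proof (pow2_ge_0 (s+X)); nra).
      lra. }
    assert (Hnrm : nrm (S N) v = nrm N v + v N * v N) by reflexivity.
    rewrite Hnrm, HQs.
    pose proof (Hbd v).
    assert (Hm1 : Rmin (a/2) (al/K) <= a/2) by apply Rmin_l.
    assert (Hm2 : Rmin (a/2) (al/K) <= al/K) by apply Rmin_r.
    assert (Hm0 : 0 < Rmin (a/2) (al/K)) by (apply Rmin_pos; [lra|apply Rdiv_lt_0_compat; lra]).
    set (mu := Rmin (a/2) (al/K)) in *.
    assert (mu * K <= al). { apply (Rmult_le_compat_r K) in Hm2; [|lra]. unfold Rdiv in Hm2. rewrite Rmult_assoc, Rinv_l in Hm2; lra. }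
    assert (0 <= s * s) by nra.
    nra.
Qed.
Lemma cont_unf f a b t : cont_on f a b -> a <= t <= b -> forall eps, eps > 0 ->
  exists del, del > 0 /\ forall s, a <= s <= b -> Rabs (s - t) < del -> Rabs (f s - f t) < eps.
Proof.
  intros H Ht eps He. destruct (H t Ht eps He) as [del [Hd Hs]].
  exists del; split; auto. intros s Hs1 Hs2. apply (Hs s). split; auto.
Qed.

Lemma ode_zero a b k z : k > 0 -> cont_on z a b ->
  (forall t, a < t < b -> derivable_pt_lim z t (- k * z t)) -> z a = 0 ->
  forall t, a <= t <= b -> z t = 0.
Proof.
  intros Hk Hc Hd Ha.
  set (h := fun s => exp (k * s) * z s).
  assert (Hh : forall t, a < t < b -> derivable_pt_lim h t 0).
  { intros t Ht. apply is_derive_Reals.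
    assert (E1 : is_derive (fun s => exp (k*s)) t (k * exp (k*t))).
    { auto_derive; auto; ring. }
    assert (E2 : is_derive z t (- k * z t)) by (apply is_derive_Reals; auto).
    pose proof (is_derive_mult _ _ _ _ _ E1 E2) as E3.
    unfold h. eapply is_derive_ext; [intros; reflexivity|].
    replace 0 with (plus (mult (k * exp (k * t)) (z t)) (mult (exp (k * t)) (- k * z t))).
    { apply E3. intros; apply Rmult_comm. }
    unfold plus, mult; simpl. ring. }
  assert (Hconst : forall s t, a < s -> s <= t -> t < b -> h s = h t).
  { intros s t Hs Hst Ht. destruct (Req_dec s t) as [->|Hne]; auto.
    destruct (MVT_cor2 h (fun _ => 0) s t) as [c [Hc1 Hc2]]; [lra| |lra].
    intros c Hc'. apply Hh. lra. }
  assert (Hint : forall t, a < t < b -> z t = 0).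
  { intros t Ht. destruct (Req_dec (z t) 0) as [Z|Z]; auto. exfalso.
    assert (Hzt : Rabs (z t) > 0) by (apply Rabs_pos_lt; auto).
    destruct (cont_unf z a b a Hc ltac:(lra) (Rabs (z t)) Hzt) as [del [Hdel Hs]].
    set (s := Rmin t (a + del/2)).
    assert (Hs1 : a < s) by (unfold s; apply Rmin_glb_lt; lra).
    assert (Hs2 : s <= t) by (unfold s; apply Rmin_l).
    assert (Hs3 : s <= a + del/2) by (unfold s; apply Rmin_r).
    pose proof (Hs s ltac:(lra) ltac:(rewrite Rabs_right; lra)) as Hlt.
    rewrite Ha, Rminus_0_r in Hlt.
    pose proof (Hconst s t Hs1 Hs2 ltac:(lra)) as Heq. unfold h in Heq.
    assert (Hzs : z s = exp (k * (t - s)) * z t).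
    { replace (k * (t - s)) with (k * t + - (k * s)) by ring. rewrite exp_plus, exp_Ropp.
      pose proof (exp_pos (k*s)). apply (Rmult_eq_reg_l (exp (k*s))); [|lra].
      rewrite Heq. field. lra. }
    assert (Hge : 1 <= exp (k * (t - s))).
    { rewrite <- exp_0. destruct (Req_dec s t) as [->|]; [replace (k*(t-t)) with 0 by ring; lra|].
      left; apply exp_increasing. nra. }
    rewrite Hzs, Rabs_mult, (Rabs_right (exp _)) in Hlt by (left; apply exp_pos).
    nra. }
  intros t Ht.
  destruct (Req_dec t a) as [->|Hta]; auto.
  destruct (Req_dec t b) as [->|Htb]; [|apply Hint; lra].
  destruct (Req_dec (z b) 0) as [Z|Z]; auto. exfalso.
  assert (Hzt : Rabs (z b) > 0) by (apply Rabs_pos_lt; auto).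
  destruct (cont_unf z a b b Hc ltac:(lra) (Rabs (z b)) Hzt) as [del [Hdel Hs]].
  set (s := Rmax (b - del/2) ((a+b)/2)).
  assert (Hs1 : b - del/2 <= s) by (unfold s; apply Rmax_l).
  assert (Hs2 : (a+b)/2 <= s) by (unfold s; apply Rmax_r).
  assert (Hs3 : s < b) by (unfold s; apply Rmax_lub_lt; lra).
  pose proof (Hs s ltac:(lra) ltac:(rewrite Rabs_left; lra)) as Hlt.
  rewrite (Hint s ltac:(lra)), Rminus_0_l, Rabs_Ropp in Hlt. lra.
Qed.
Lemma cont_plus f g a b : cont_on f a b -> cont_on g a b -> cont_on (fun t => f t + g t) a b.
Proof. intros Hf Hg t Ht. apply limit_plus; auto. Qed.
Lemma cont_mul f g a b : cont_on f a b -> cont_on g a b -> cont_on (fun t => f t * g t) a b.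
Proof. intros Hf Hg t Ht. apply limit_mul; auto. Qed.
Lemma cont_const c a b : cont_on (fun _ => c) a b.
Proof. intros t Ht eps He. exists 1; split; [lra|]. intros x _. simpl. unfold R_dist. rewrite Rminus_diag, Rabs_R0. lra. Qed.
Lemma cont_fsum N g a b : (forall k, (k < N)%nat -> cont_on (g k) a b) ->
  cont_on (fun t => fsum N (fun k => g k t)) a b.
Proof.
  induction N; intros H; simpl.
  - apply cont_const.
  - apply cont_plus; [apply IHN; intros; apply H; lia | apply H; lia].
Qed.

Lemma RInt_fsum N (g : nat -> R -> R) a b : (forall k, (k < N)%nat -> ex_RInt (g k) a b) ->
  ex_RInt (fun t => fsum N (fun k => g k t)) a b /\
  RInt (fun t => fsum N (fun k => g k t)) a b = fsum N (fun k => RInt (g k) a b).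
Proof.
  induction N; intros H; simpl.
  - split; [apply (ex_RInt_const a b 0)|]. rewrite RInt_const. unfold scal; simpl. unfold mult; simpl. ring.
  - destruct IHN as [E1 E2]; [intros; apply H; lia|].
    assert (E3 : ex_RInt (g N) a b) by (apply H; lia).
    split.
    + apply (ex_RInt_plus _ _ _ _ E1 E3).
    + rewrite <- E2. apply (RInt_plus _ _ _ _ E1 E3).
Qed.

Lemma RInt_pos_zero f a b t1 : cont_on f a b -> (forall t, 0 <= f t) -> ex_RInt f a b ->
  RInt f a b = 0 -> a < t1 < b -> f t1 = 0.
Proof.
  intros Hc Hp He HR Ht.
  destruct (Req_dec (f t1) 0) as [Z|Z]; auto. exfalso.
  assert (Hpos : f t1 / 2 > 0) by (pose proof (Hp t1); lra).
  destruct (cont_unf f a b t1 Hc ltac:(lra) _ Hpos) as [del [Hdel Hs]].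
  set (c := Rmax a (t1 - del/2)). set (e := Rmin b (t1 + del/2)).
  assert (c1 : a <= c) by apply Rmax_l. assert (c2 : t1 - del/2 <= c) by apply Rmax_r.
  assert (c3 : c < t1) by (apply Rmax_lub_lt; lra).
  assert (e1 : e <= b) by apply Rmin_l. assert (e2 : e <= t1 + del/2) by apply Rmin_r.
  assert (e3 : t1 < e) by (apply Rmin_glb_lt; lra).
  assert (Ec : ex_RInt f a c) by (apply (ex_RInt_Chasles_1 f a c b); [lra|auto]).
  assert (Ecb : ex_RInt f c b) by (apply (ex_RInt_Chasles_2 f a c b); [lra|auto]).
  assert (Ece : ex_RInt f c e) by (apply (ex_RInt_Chasles_1 f c e b); [lra|auto]).
  assert (Eeb : ex_RInt f e b) by (apply (ex_RInt_Chasles_2 f c e b); [lra|auto]).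
  pose proof (RInt_Chasles f a c b Ec Ecb) as C1.
  pose proof (RInt_Chasles f c e b Ece Eeb) as C2.
  unfold plus in C1, C2; simpl in C1, C2.
  assert (I1 : 0 <= RInt f a c) by (apply RInt_ge_0; auto).
  assert (I3 : 0 <= RInt f e b) by (apply RInt_ge_0; auto).
  assert (I2 : RInt (fun _ => f t1 / 2) c e <= RInt f c e).
  { apply RInt_le; [lra|apply ex_RInt_const|auto|].
    intros x Hx. pose proof (Hs x ltac:(lra) ltac:(apply Rabs_def1; lra)) as Hx'.
    apply Rabs_def2 in Hx'. lra. }
  rewrite RInt_const in I2. unfold scal in I2; simpl in I2. unfold mult in I2; simpl in I2.
  assert (0 < (e - c) * (f t1 / 2)) by (apply Rmult_lt_0_compat; lra).
  lra.
Qed.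

Lemma fsum_split A B f : fsum (A + B) f = fsum A f + fsum B (fun j => f (A + j)%nat).
Proof. induction B; simpl. - rewrite Nat.add_0_r; lra. - rewrite Nat.add_succ_r. simpl. rewrite IHB. lra. Qed.

Definition theta (n d : nat) (v : nat -> R) (c : nat) : R :=
  if (c <? n)%nat then v c
  else if andb (n * n <=? c)%nat (c <? n * n + d)%nat then v (n + (c - n * n))%nat else 0.

Lemma Ysum n d (hn : (1 <= n)%nat) (xt ut : nat -> R) v i : (i < n)%nat ->
  fsum (n * (n + d)) (fun c => Yent n d xt ut i c * theta n d v c)
  = if Nat.eqb i 0 then fsum n (fun l => xt l * v l) + fsum d (fun j => ut j * v (n + j)%nat) else 0.
Proof.
  intros Hi.
  replace (n * (n + d))%nat with (n + ((n * n - n) + (d + (n * d - d))))%nat by nia.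
  rewrite !fsum_split.
  rewrite (fsum_0 (n * n - n)); [| intros j Hj; unfold theta;
    replace ((n + j) <? n)%nat with false by (symmetry; apply Nat.ltb_ge; lia);
    replace (n * n <=? n + j)%nat with false by (symmetry; apply Nat.leb_gt; nia);
    simpl; ring].
  rewrite (fsum_0 (n * d - d)); [| intros j Hj; unfold theta;
    replace ((n + (n * n - n + (d + j))) <? n)%nat with false by (symmetry; apply Nat.ltb_ge; lia);
    replace ((n + (n * n - n + (d + j))) <? n * n + d)%nat with false by (symmetry; apply Nat.ltb_ge; nia);
    rewrite Bool.andb_false_r; ring].
  assert (P1 : fsum n (fun j => Yent n d xt ut i j * theta n d v j)
     = if Nat.eqb i 0 then fsum n (fun l => xt l * v l) else 0).
  { destruct (Nat.eqb_spec i 0).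
    - apply fsum_ext; intros j Hj. unfold Yent, theta.
      replace (j <? n * n)%nat with true by (symmetry; apply Nat.ltb_lt; nia).
      replace (j <? n)%nat with true by (symmetry; apply Nat.ltb_lt; nia).
      rewrite Nat.div_small, Nat.mod_small by lia. subst; simpl. ring.
    - apply fsum_0; intros j Hj. unfold Yent, theta.
      replace (j <? n * n)%nat with true by (symmetry; apply Nat.ltb_lt; nia).
      rewrite Nat.div_small by lia. destruct (Nat.eqb_spec i 0); [lia|]. ring. }
  assert (P3 : fsum d (fun j => Yent n d xt ut i (n + (n * n - n + j)) * theta n d v (n + (n * n - n + j)))
     = if Nat.eqb i 0 then fsum d (fun j => ut j * v (n + j)%nat) else 0).
  { destruct (Nat.eqb_spec i 0).
    - apply fsum_ext; intros j Hj. unfold Yent, theta.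
      replace (n + (n * n - n + j))%nat with (n * n + j)%nat by nia.
      replace (n * n + j <? n * n)%nat with false by (symmetry; apply Nat.ltb_ge; nia).
      replace (n * n + j <? n)%nat with false by (symmetry; apply Nat.ltb_ge; nia).
      replace (n * n + j - n * n)%nat with j by lia.
      replace (n * n <=? n * n + j)%nat with true by (symmetry; apply Nat.leb_le; nia).
      replace (n * n + j <? n * n + d)%nat with true by (symmetry; apply Nat.ltb_lt; nia).
      rewrite Nat.div_small, Nat.mod_small by lia. subst; simpl. ring.
    - apply fsum_0; intros j Hj. unfold Yent.
      replace (n + (n * n - n + j))%nat with (n * n + j)%nat by nia.
      replace (n * n + j <? n * n)%nat with false by (symmetry; apply Nat.ltb_ge; nia).
      replace (n * n + j - n * n)%nat with j by lia.
      rewrite Nat.div_small by lia. destruct (Nat.eqb_spec i 0); [lia|]. ring. }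
  rewrite P1.
  replace (fsum d (fun j => Yent n d xt ut i (n + (n * n - n + (j + 0)))%nat * theta n d v (n + (n * n - n + (j + 0)))%nat))
    with (fsum d (fun j => Yent n d xt ut i (n + (n * n - n + j))%nat * theta n d v (n + (n * n - n + j))%nat))
    by (apply fsum_ext; intros; rewrite Nat.add_0_r; auto).
  rewrite P3. destruct (i =? 0)%nat; ring.
Qed.

Lemma deriv_fsum N (g : nat -> R -> R) dg t : (forall k, (k < N)%nat -> is_derive (g k) t (dg k)) ->
  is_derive (fun s => fsum N (fun k => g k s)) t (fsum N dg).
Proof.
  induction N; intros H; simpl.
  - apply (is_derive_const (V := R_NormedModule) 0 t).
  - apply (is_derive_plus (V := R_NormedModule)); [apply IHN; intros; apply H; lia | apply H; lia].
Qed.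

Lemma tw_bounds p tw : (forall j, (S j < p)%nat -> tw j < tw (S j)) ->
  forall j, (j < p)%nat -> tw 0%nat <= tw j /\ tw j <= tw (p - 1)%nat.
Proof.
  intros Hinc. split.
  - induction j; [lra|]. assert (tw j < tw (S j)) by (apply Hinc; lia). assert (tw 0%nat <= tw j) by (apply IHj; lia). lra.
  - assert (G : forall k j, (j + k = p - 1)%nat -> tw j <= tw (p - 1)%nat).
    { induction k; intros j0 Hj0.
      - replace j0 with (p - 1)%nat by lia. lra.
      - assert (tw j0 < tw (S j0)) by (apply Hinc; lia). assert (tw (S j0) <= tw (p-1)%nat) by (apply IHk; lia). lra. }
    apply (G (p - 1 - j)%nat). lia.
Qed.

Lemma Wsplit n d x u t v : fsum (n + d) (fun l => v l * wsig n d x u t l)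
  = fsum n (fun l => x t l * v l) + fsum d (fun j => u t j * v (n + j)%nat).
Proof.
  rewrite fsum_split. f_equal.
  - apply fsum_ext; intros l Hl. unfold wsig. replace (l <? n)%nat with true by (symmetry; apply Nat.ltb_lt; lia). ring.
  - apply fsum_ext; intros j Hj. unfold wsig.
    replace (n + j <? n)%nat with false by (symmetry; apply Nat.ltb_ge; lia).
    replace (n + j <? n + d)%nat with true by (symmetry; apply Nat.ltb_lt; lia).
    replace (n + j - n)%nat with j by lia. ring.
Qed.

Lemma key (n d : nat) (hn : (1 <= n)%nat)
  (t0 tc km : R) (hkm : km > 0)
  (x u : R -> nat -> R)
  (m : R -> nat -> nat -> R)
  (hm0 : forall i c, (i < n)%nat -> (c < n * (n + d))%nat -> m t0 i c = 0)
  (hmc : forall i c, (i < n)%nat -> (c < n * (n + d))%nat ->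
           cont_on (fun t => m t i c) t0 tc)
  (hmd : forall i c, (i < n)%nat -> (c < n * (n + d))%nat ->
           forall t, t0 < t < tc ->
           derivable_pt_lim (fun s => m s i c) t
             (Yent n d (x t) (u t) i c - km * m t i c))
  (p : nat) (tw : nat -> R)
  (hp : (n + d <= p)%nat)
  (htw0 : t0 <= tw 0%nat)
  (htw_inc : forall j, (S j < p)%nat -> tw j < tw (S j))
  (htwp : tw (p - 1)%nat = tc)
  (hrank : stacked_full_col_rank n p (n * (n + d)) m tw) (v : nat -> R) :
  (forall t, t0 < t < tc -> fsum (n + d) (fun l => v l * wsig n d x u t l) = 0) ->
  forall l, (l < n + d)%nat -> v l = 0.
Proof.
  intros HW.
  set (N' := (n * (n + d))%nat).
  set (th := theta n d v).
  assert (Hz : forall i, (i < n)%nat -> forall t, t0 <= t <= tc ->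
     fsum N' (fun c => m t i c * th c) = 0).
  { intros i Hi. apply (ode_zero t0 tc km (fun t => fsum N' (fun c => m t i c * th c)) hkm).
    - apply cont_fsum. intros c Hc. apply cont_mul; [apply hmc; auto|apply cont_const].
    - intros t Ht. apply is_derive_Reals.
      assert (E : is_derive (fun s => fsum N' (fun c => m s i c * th c)) t
                (fsum N' (fun c => (Yent n d (x t) (u t) i c - km * m t i c) * th c))).
      { apply deriv_fsum. intros c Hc.
        eapply is_derive_ext; [intros; apply Rmult_comm|].
        rewrite Rmult_comm. apply is_derive_scal. apply is_derive_Reals. apply hmd; auto. }
      replace (- km * fsum N' (fun c => m t i c * th c))
        with (fsum N' (fun c => (Yent n d (x t) (u t) i c - km * m t i c) * th c)); auto.
      transitivity (fsum N' (fun c => Yent n d (x t) (u t) i c * th c) + (- km) * fsum N' (fun c => m t i c * th c)).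
      { rewrite <- fsum_scal, <- fsum_plus. apply fsum_ext; intros; ring. }
      unfold N', th. rewrite Ysum by auto. rewrite <- Wsplit, HW by auto.
      destruct (i =? 0)%nat; ring.
    - apply fsum_0; intros c Hc. rewrite hm0; auto. ring. }
  assert (Hth : forall c, (c < N')%nat -> th c = 0).
  { apply hrank. intros j i Hj Hi. apply Hz; auto.
    destruct (tw_bounds p tw htw_inc j Hj). lra. }
  intros l Hl.
  destruct (Nat.ltb_spec l n).
  - pose proof (Hth l ltac:(unfold N'; nia)) as H0. unfold th, theta in H0.
    replace (l <? n)%nat with true in H0 by (symmetry; apply Nat.ltb_lt; lia). auto.
  - pose proof (Hth (n * n + (l - n))%nat ltac:(unfold N'; nia)) as H0. unfold th, theta in H0.
    replace (n * n + (l - n) <? n)%nat with false in H0 by (symmetry; apply Nat.ltb_ge; nia).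
    replace (n * n <=? n * n + (l - n))%nat with true in H0 by (symmetry; apply Nat.leb_le; nia).
    replace (n * n + (l - n) <? n * n + d)%nat with true in H0 by (symmetry; apply Nat.ltb_lt; nia).
    simpl in H0. replace (n + (n * n + (l - n) - n * n))%nat with l in H0 by lia. auto.
Qed.

Lemma RInt_cmul f a b c : ex_RInt f a b ->
  ex_RInt (fun t => c * f t) a b /\ RInt (fun t => c * f t) a b = c * RInt f a b.
Proof.
  intros H. split.
  - apply (ex_RInt_scal f a b c H).
  - apply (RInt_scal f a b c H).
Qed.

Theorem lemma1
  (n d : nat) (hn : (1 <= n)%nat)
  (t0 tc km : R) (hkm : km > 0)
  (x u : R -> nat -> R)
  (hx : forall l, (l < n)%nat -> cont_on (fun t => x t l) t0 tc)
  (hu : forall l, (l < d)%nat -> cont_on (fun t => u t l) t0 tc)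
  (m : R -> nat -> nat -> R)
  (hm0 : forall i c, (i < n)%nat -> (c < n * (n + d))%nat -> m t0 i c = 0)
  (hmc : forall i c, (i < n)%nat -> (c < n * (n + d))%nat ->
           cont_on (fun t => m t i c) t0 tc)
  (hmd : forall i c, (i < n)%nat -> (c < n * (n + d))%nat ->
           forall t, t0 < t < tc ->
           derivable_pt_lim (fun s => m s i c) t
             (Yent n d (x t) (u t) i c - km * m t i c))
  (p : nat) (tw : nat -> R)
  (hp : (n + d <= p)%nat)
  (htw0 : t0 <= tw 0%nat)
  (htw_inc : forall j, (S j < p)%nat -> tw j < tw (S j))
  (htwp : tw (p - 1)%nat = tc)
  (hrank : stacked_full_col_rank n p (n * (n + d)) m tw) :
  exciting (n + d) (wsig n d x u) t0 tc.
Proof.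
  set (w := wsig n d x u).
  set (N := (n + d)%nat).
  destruct (classic (exists pr : (forall i j : nat, Riemann_integrable (fun t => w t i * w t j) t0 tc), True))
    as [[pr0 _] | Hno].
  2: { exists 1. split; [lra|]. intros pr. exfalso. apply Hno. exists pr. auto. }
  assert (Hab : t0 <= tc).
  { destruct (tw_bounds p tw htw_inc 0%nat ltac:(lia)). lra. }
  set (A := fun i j => RInt (fun t => w t i * w t j) t0 tc).
  assert (Ef : forall i j, ex_RInt (fun t => w t i * w t j) t0 tc) by (intros; apply ex_RInt_Reals_1; auto).
  set (W := fun (v : nat -> R) t => fsum N (fun l => v l * w t l)).
  assert (HQ : forall v, ex_RInt (fun t => W v t * W v t) t0 tc /\ Qf N A v = RInt (fun t => W v t * W v t) t0 tc).
  { intros v.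
    assert (Hin : forall i, ex_RInt (fun t => fsum N (fun j => v i * v j * (w t i * w t j))) t0 tc /\
       RInt (fun t => fsum N (fun j => v i * v j * (w t i * w t j))) t0 tc = fsum N (fun j => v i * A i j * v j)).
    { intros i. destruct (RInt_fsum N (fun j t => v i * v j * (w t i * w t j)) t0 tc) as [E1 E2].
      { intros k _. apply RInt_cmul, Ef. }
      split; auto. rewrite E2. apply fsum_ext; intros j _.
      rewrite (proj2 (RInt_cmul _ _ _ (v i * v j) (Ef i j))). unfold A. ring. }
    destruct (RInt_fsum N (fun i t => fsum N (fun j => v i * v j * (w t i * w t j))) t0 tc) as [E1 E2].
    { intros k _. apply Hin. }
    assert (Eq : forall t, fsum N (fun i => fsum N (fun j => v i * v j * (w t i * w t j))) = W v t * W v t).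
    { intros t. unfold W. rewrite fsum_mul. apply fsum_ext; intros; apply fsum_ext; intros; ring. }
    split.
    - apply (ex_RInt_ext _ _ _ _ (fun t _ => Eq t) E1).
    - rewrite <- (RInt_ext _ _ _ _ (fun t _ => Eq t)), E2. unfold Qf. apply fsum_ext; intros i _.
      symmetry. apply Hin. }
  assert (Hcw : forall l, (l < N)%nat -> cont_on (fun t => w t l) t0 tc).
  { intros l Hl. unfold w, wsig. destruct (l <? n)%nat eqn:E1.
    - apply hx. apply Nat.ltb_lt; auto.
    - apply Nat.ltb_ge in E1. replace (l <? n + d)%nat with true by (symmetry; apply Nat.ltb_lt; unfold N in Hl; lia).
      apply hu. unfold N in Hl; lia. }
  destruct (PD N A) as [alpha [Hal Hbd]].
  { intros v. rewrite (proj2 (HQ v)). apply RInt_ge_0; auto. apply HQ. intros; nra. }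
  { intros v Hv. rewrite (proj2 (HQ v)) in Hv.
    apply (key n d hn t0 tc km hkm x u m hm0 hmc hmd p tw hp htw0 htw_inc htwp hrank v).
    intros t Ht.
    assert (W v t * W v t = 0).
    { apply (RInt_pos_zero (fun t => W v t * W v t) t0 tc t); auto.
      - apply cont_mul; unfold W; apply cont_fsum; intros k Hk; apply cont_mul; auto; apply cont_const.
      - intros; nra.
      - apply HQ. }
    unfold W, w, N in H. nra. }
  exists alpha. split; auto. intros pr v.
  assert (E : Qf N A v = fsum N (fun i => fsum N (fun j => v i * RiemannInt (pr i j) * v j))).
  { unfold Qf. apply fsum_ext; intros i _. apply fsum_ext; intros j _. unfold A.
    rewrite (RInt_Reals _ _ _ (pr i j)). auto. }
  fold N. rewrite <- E. apply Hbd.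
Qed.
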